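(* Let $A,B\in\mathcal{F}_2$ be commonly ordered configurations of two robots. There exists a feasible schedule $M$ from $A$ to $B$ with $\Sigma(M)=\sum_{i=1}^2\|a_i-b_i\|$ in which each robot makes at most one turn.
   Context: Robots are axis-parallel unit squares: a robot at $p$ occupies $p+\boxdot$, $\boxdot=\{q:\|q\|_\infty\le1/2\}$. Distances use the $L_1$ norm $\|p\|=|x(p)|+|y(p)|$. A configuration of two robots is a pair $(p_1,p_2)$ with $\|p_1-p_2\|_\infty\ge 1$; $\mathcal{F}_2$ is their set. A trajectory from $a$ to $b$ over $T=[t_0,t_1]$ is a $1$-Lipschitz (w.r.t. $L_1$) map $m:T\to\mathbb{R}^2$, $m(t_0)=a$, $m(t_1)=b$, whose image is a polygonal chain; a turn is a point of the image where two segments of different orientations meet. A schedule $M=(m_1,m_2)$ is feasible if $M(t)\in\mathcal{F}_2$ for all $t$; $\Sigma(M)$ is the sum of the lengths of the chains. The four orderings are $\mathcal{F}_2^{\rightarrow}=\{(p_1,p_2)\in\mathcal{F}_2: x(p_1)\ge x(p_2)+1\}$, $\mathcal{F}_2^{\leftarrow}=\{x(p_2)\ge x(p_1)+1\}$, $\mathcal{F}_2^{\uparrow}=\{y(p_1)\ge y(p_2)+1\}$, $\mathcal{F}_2^{\downarrow}=\{y(p_2)\ge y(p_1)+1\}$. Two configurations are commonly ordered if both lie in the same ordering. *)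

(* Defs.v *)
From Stdlib Require Import Reals Lra List.
Open Scope R_scope.

Definition pt : Type := (R * R)%type.
Definition px (p : pt) : R := fst p.
Definition py (p : pt) : R := snd p.
Definition padd (p q : pt) : pt := (px p + px q, py p + py q).
Definition psub (p q : pt) : pt := (px p - px q, py p - py q).
Definition pscale (s : R) (p : pt) : pt := (s * px p, s * py p).

Definition norm1 (p : pt) : R := Rabs (px p) + Rabs (py p).
Definition normInf (p : pt) : R := Rmax (Rabs (px p)) (Rabs (py p)).

(* F_2: configurations of two unit-square robots that do not overlap. *)
Definition in_F2 (p1 p2 : pt) : Prop := normInf (psub p1 p2) >= 1.

Definition ord_right (p1 p2 : pt) : Prop := in_F2 p1 p2 /\ px p1 >= px p2 + 1.
Definition ord_left  (p1 p2 : pt) : Prop := in_F2 p1 p2 /\ px p2 >= px p1 + 1.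
Definition ord_up    (p1 p2 : pt) : Prop := in_F2 p1 p2 /\ py p1 >= py p2 + 1.
Definition ord_down  (p1 p2 : pt) : Prop := in_F2 p1 p2 /\ py p2 >= py p1 + 1.

Definition commonly_ordered (a1 a2 b1 b2 : pt) : Prop :=
  (ord_right a1 a2 /\ ord_right b1 b2) \/
  (ord_left a1 a2 /\ ord_left b1 b2) \/
  (ord_up a1 a2 /\ ord_up b1 b2) \/
  (ord_down a1 a2 /\ ord_down b1 b2).

Definition seg (p q : pt) (z : pt) : Prop :=
  exists s, 0 <= s <= 1 /\ z = padd p (pscale s (psub q p)).

(* A polygonal chain is given by its first vertex v0 and the list of the
   remaining vertices. *)
Fixpoint chain_img (v0 : pt) (rest : list pt) (z : pt) : Prop :=
  match rest with
  | nil => z = v0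
  | v1 :: r => seg v0 v1 z \/ chain_img v1 r z
  end.

Fixpoint chain_nondeg (v0 : pt) (rest : list pt) : Prop :=
  match rest with
  | nil => True
  | v1 :: r => v0 <> v1 /\ chain_nondeg v1 r
  end.

Fixpoint chain_len (v0 : pt) (rest : list pt) : R :=
  match rest with
  | nil => 0
  | v1 :: r => norm1 (psub v1 v0) + chain_len v1 r
  end.

(* Two directions have the same orientation iff they are parallel. *)
Definition cross (u v : pt) : R := px u * py v - py u * px v.

Fixpoint chain_turns (v0 : pt) (rest : list pt) : nat :=
  match rest with
  | v1 :: ((v2 :: _) as r) =>
      (if Req_EM_T (cross (psub v1 v0) (psub v2 v1)) 0 then 0%nat else 1%nat)
      + chain_turns v1 r
  | _ => 0%nat
  end.

Definition trajectory (t0 t1 : R) (a b : pt) (m : R -> pt)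
    (v0 : pt) (rest : list pt) : Prop :=
  t0 <= t1 /\
  (forall s t, t0 <= s <= t1 -> t0 <= t <= t1 ->
     norm1 (psub (m s) (m t)) <= Rabs (s - t)) /\
  m t0 = a /\ m t1 = b /\
  chain_nondeg v0 rest /\
  (forall z, (exists t, t0 <= t <= t1 /\ z = m t) <-> chain_img v0 rest z).

Definition feasible (t0 t1 : R) (m1 m2 : R -> pt) : Prop :=
  forall t, t0 <= t <= t1 -> in_F2 (m1 t) (m2 t).

(* Main.v *)
Require Import Defs.
From Stdlib Require Import Reals List Lra Lia Classical.
Open Scope R_scope.

Definition between (u v w : R) : Prop := (u <= w <= v) \/ (v <= w <= u).
Definition inbox (a b z : pt) : Prop :=
  between (px a) (px b) (px z) /\ between (py a) (py b) (py z).

Lemma between_l u v : between u v u.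
Proof. unfold between; destruct (Rle_dec u v); [left|right]; lra. Qed.
Lemma between_r u v : between u v v.
Proof. unfold between; destruct (Rle_dec u v); [left|right]; lra. Qed.
Lemma between_conv u v x y s :
  between u v x -> between u v y -> 0 <= s <= 1 -> between u v (x + s*(y-x)).
Proof.
  unfold between; intros Hx Hy Hs.
  assert (H1: x + s*(y-x) = (1-s)*x + s*y) by ring. rewrite H1.
  destruct Hx as [Hx|Hx]; destruct Hy as [Hy|Hy]; [left|left|right|right]; split; nra.
Qed.

Lemma seg_box p q z a b : seg p q z -> inbox a b p -> inbox a b q -> inbox a b z.
Proof.
  intros [s [Hs ->]] [Hp1 Hp2] [Hq1 Hq2].
  unfold inbox, padd, pscale, psub, px, py in *; simpl in *.
  split; apply between_conv; auto.
Qed.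

Lemma norm1_sym p q : norm1 (psub p q) = norm1 (psub q p).
Proof.
  unfold norm1, psub, px, py; simpl.
  rewrite (Rabs_minus_sym (fst p)), (Rabs_minus_sym (snd p)); ring.
Qed.

Lemma norm1_triang x y z : norm1 (psub x z) <= norm1 (psub x y) + norm1 (psub y z).
Proof.
  unfold norm1, psub, px, py; simpl.
  pose proof (Rabs_triang (fst x - fst y) (fst y - fst z)).
  pose proof (Rabs_triang (snd x - snd y) (snd y - snd z)).
  replace (fst x - fst z) with ((fst x - fst y) + (fst y - fst z)) by ring.
  replace (snd x - snd z) with ((snd x - snd y) + (snd y - snd z)) by ring.
  lra.
Qed.

Lemma norm1_zero p : norm1 (psub p p) = 0.
Proof.
  unfold norm1, psub, px, py; simpl.
  replace (fst p - fst p) with 0 by ring; replace (snd p - snd p) with 0 by ring.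
  rewrite Rabs_R0; ring.
Qed.

Lemma norm1_pos p q : p <> q -> 0 < norm1 (psub q p).
Proof.
  intros H. destruct p as [p1 p2], q as [q1 q2].
  unfold norm1, psub, px, py; simpl.
  assert (Rabs (q1-p1) > 0 \/ Rabs (q2 - p2) > 0).
  { destruct (Req_dec q1 p1).
    - subst. destruct (Req_dec q2 p2).
      + subst; contradiction.
      + right; apply Rabs_pos_lt; lra.
    - left; apply Rabs_pos_lt; lra. }
  pose proof (Rabs_pos (q1-p1)); pose proof (Rabs_pos (q2-p2)); lra.
Qed.

Lemma inF2_x p q : px p - px q >= 1 \/ px q - px p >= 1 -> in_F2 p q.
Proof.
  intros H. unfold in_F2, normInf. apply Rle_ge.
  eapply Rle_trans; [|apply Rmax_l].
  unfold psub, px, py in *; simpl.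
  unfold Rabs; destruct Rcase_abs; lra.
Qed.

Lemma inF2_y p q : py p - py q >= 1 \/ py q - py p >= 1 -> in_F2 p q.
Proof.
  intros H. unfold in_F2, normInf. apply Rle_ge.
  eapply Rle_trans; [|apply Rmax_r].
  unfold psub, px, py in *; simpl.
  unfold Rabs; destruct Rcase_abs; lra.
Qed.

Definition segm (p q : pt) (d : R) (t : R) : pt := padd p (pscale (t / d) (psub q p)).

Lemma seg_traj p q d : d = norm1 (psub q p) -> p <> q ->
  trajectory 0 d p q (segm p q d) p (q :: nil).
Proof.
  intros Hdef Hpq. pose proof (norm1_pos p q Hpq) as Hd. rewrite <- Hdef in Hd.
  unfold trajectory. split; [lra|]. split; [|split; [|split; [|split]]].
  - intros s t _ _. unfold segm, norm1, padd, pscale, psub, px, py in *; simpl in *.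
    replace (fst p + s / d * (fst q - fst p) - (fst p + t / d * (fst q - fst p)))
      with ((s - t) / d * (fst q - fst p)) by (field; lra).
    replace (snd p + s / d * (snd q - snd p) - (snd p + t / d * (snd q - snd p)))
      with ((s - t) / d * (snd q - snd p)) by (field; lra).
    unfold Rdiv. rewrite !Rabs_mult. rewrite Rabs_inv. rewrite (Rabs_pos_eq d) by lra.
    apply Req_le. rewrite <- Rmult_plus_distr_l, <- Hdef. field. lra.
  - unfold segm. replace (0/d) with 0 by (field; lra).
    destruct p; unfold padd, pscale, psub, px, py; simpl; f_equal; ring.
  - unfold segm. replace (d/d) with 1 by (field; lra).
    destruct p, q; unfold padd, pscale, psub, px, py; simpl; f_equal; ring.
  - simpl; tauto.
  - intros z; simpl. split.
    + intros [t [Ht ->]]. left. exists (t/d). split; [|reflexivity].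
      assert (Hi : / d * d = 1) by (field; lra).
      assert (0 < / d) by (apply Rinv_0_lt_compat; lra).
      unfold Rdiv; split; nra.
    + intros [[s [Hs ->]] | ->].
      * exists (s*d). split; [nra|]. unfold segm.
        replace (s*d/d) with s by (field; lra). reflexivity.
      * exists d. split; [lra|]. unfold segm. replace (d/d) with 1 by (field; lra).
        destruct p, q; unfold padd, pscale, psub, px, py; simpl; f_equal; ring.
Qed.

Lemma concat T1 T2 a c b m1 m2 r2 :
  trajectory 0 T1 a c m1 a (c :: nil) -> trajectory 0 T2 c b m2 c r2 ->
  trajectory 0 (T1+T2) a b (fun t => if Rle_dec t T1 then m1 t else m2 (t - T1)) a (c :: r2).
Proof.
  intros [H0 [HL1 [Ha [Hc [Hnd1 Him1]]]]] [H0' [HL2 [Hc' [Hb [Hnd2 Him2]]]]].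
  split; [lra|]. split; [|split;[|split;[|split]]].
  - intros s t Hs Ht. cbv beta. destruct (Rle_dec s T1); destruct (Rle_dec t T1).
    + apply HL1; lra.
    + eapply Rle_trans; [apply (norm1_triang _ c _)|].
      pose proof (HL1 s T1 ltac:(lra) ltac:(lra)) as E1. rewrite Hc in E1.
      pose proof (HL2 0 (t-T1) ltac:(lra) ltac:(lra)) as E2. rewrite Hc' in E2.
      revert E1 E2; unfold Rabs; repeat destruct Rcase_abs; intros; lra.
    + rewrite norm1_sym, Rabs_minus_sym.
      eapply Rle_trans; [apply (norm1_triang _ c _)|].
      pose proof (HL1 t T1 ltac:(lra) ltac:(lra)) as E1. rewrite Hc in E1.
      pose proof (HL2 0 (s-T1) ltac:(lra) ltac:(lra)) as E2. rewrite Hc' in E2.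
      revert E1 E2; unfold Rabs; repeat destruct Rcase_abs; intros; lra.
    + pose proof (HL2 (s-T1) (t-T1) ltac:(lra) ltac:(lra)) as E.
      replace (s - T1 - (t - T1)) with (s - t) in E by ring. exact E.
  - cbv beta. destruct (Rle_dec 0 T1); [exact Ha | lra].
  - cbv beta. destruct (Rle_dec (T1+T2) T1).
    + assert (T2 = 0) by lra. subst T2. rewrite Rplus_0_r, Hc. congruence.
    + replace (T1+T2-T1) with T2 by ring; exact Hb.
  - simpl in Hnd1 |- *. split; [tauto | exact Hnd2].
  - intros z. simpl in Him1 |- *. split.
    + intros [t [Ht ->]]. destruct (Rle_dec t T1).
      * destruct (proj1 (Him1 (m1 t)) (ex_intro _ t (conj (conj (proj1 Ht) r) eq_refl))) as [H|H].
        -- left; exact H.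
        -- right; apply Him2; exists 0; split; [lra|]. rewrite H; symmetry; exact Hc'.
      * right. apply Him2. exists (t - T1). split; [lra| reflexivity].
    + intros [H|H].
      * destruct (proj2 (Him1 z) (or_introl H)) as [t [Ht ->]]. exists t. split; [lra|].
        destruct (Rle_dec t T1); [reflexivity| lra].
      * destruct (proj2 (Him2 z) H) as [t [Ht ->]]. exists (t + T1). split; [lra|].
        destruct (Rle_dec (t+T1) T1).
        -- assert (t = 0) by lra. subst t. rewrite Rplus_0_l, Hc, Hc'. reflexivity.
        -- replace (t + T1 - T1) with t by ring; reflexivity.
Qed.

Lemma const_traj a : trajectory 0 0 a a (fun _ => a) a nil.
Proof.
  split; [lra|]. split; [|split;[|split;[|split]]]; try reflexivity; try exact I.
  - intros s t _ _. rewrite norm1_zero. apply Rabs_pos.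
  - intros z; simpl. split; [intros [t [_ H]]; exact H | intros H; exists 0; split; [lra|exact H]].
Qed.

Lemma path a b : exists L m v r, trajectory 0 L a b m v r /\
  chain_len v r = norm1 (psub a b) /\ (chain_turns v r <= 1)%nat /\
  (forall z, chain_img v r z -> inbox a b z).
Proof.
  pose (c := (px b, py a)).
  assert (Ha: inbox a b a) by (split; apply between_l).
  assert (Hb: inbox a b b) by (split; apply between_r).
  assert (Hc: inbox a b c) by (unfold c, inbox, px, py; simpl; split; [apply between_r|apply between_l]).
  destruct (classic (a = c)) as [Hac|Hac]; destruct (classic (c = b)) as [Hcb|Hcb].
  - assert (E : a = b) by congruence. rewrite <- E.
    exists 0, (fun _ => a), a, nil. split; [apply const_traj|].
    split; [simpl; rewrite norm1_zero; reflexivity|]. split; [simpl; lia|].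
    intros z Hz; simpl in Hz; rewrite Hz; split; apply between_l.
  - assert (E : a <> b) by congruence.
    exists (norm1 (psub b a)), (segm a b (norm1 (psub b a))), a, (b :: nil).
    split; [apply seg_traj; auto|]. split; [simpl; rewrite norm1_sym; ring|].
    split; [simpl; lia|].
    intros z [Hz|Hz]; [apply (seg_box _ _ _ _ _ Hz); auto | simpl in Hz; rewrite Hz; auto].
  - assert (E : a <> b) by congruence.
    exists (norm1 (psub b a)), (segm a b (norm1 (psub b a))), a, (b :: nil).
    split; [apply seg_traj; auto|]. split; [simpl; rewrite norm1_sym; ring|].
    split; [simpl; lia|].
    intros z [Hz|Hz]; [apply (seg_box _ _ _ _ _ Hz); auto | simpl in Hz; rewrite Hz; auto].
  - exists (norm1 (psub c a) + norm1 (psub b c)),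
      (fun t => if Rle_dec t (norm1 (psub c a)) then segm a c (norm1 (psub c a)) t
                else segm c b (norm1 (psub b c)) (t - norm1 (psub c a))), a, (c :: b :: nil).
    split; [apply concat; apply seg_traj; auto|].
    split.
    { simpl. unfold c, norm1, psub, px, py; simpl.
      replace (snd a - snd a) with 0 by ring; replace (fst b - fst b) with 0 by ring.
      rewrite Rabs_R0. rewrite (Rabs_minus_sym (fst b)), (Rabs_minus_sym (snd b)); ring. }
    split; [simpl; destruct (Req_EM_T _ _); simpl; lia|].
    intros z [H|[H|H]].
    + apply (seg_box _ _ _ _ _ H); auto.
    + apply (seg_box _ _ _ _ _ H); auto.
    + simpl in H; rewrite H; auto.
Qed.

Lemma reparam T L a b m v r g : trajectory 0 L a b m v r -> 0 <= T ->
  (forall t, 0<=t<=T -> 0 <= g t <= L) -> (forall s t, Rabs (g s - g t) <= Rabs (s - t)) ->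
  g 0 = 0 -> g T = L -> (forall s, 0<=s<=L -> exists t, 0<=t<=T /\ g t = s) ->
  trajectory 0 T a b (fun t => m (g t)) v r.
Proof.
  intros [H0 [HL [Ha [Hb [Hnd Him]]]]] HT Hg Hlip Hg0 HgT Hsurj.
  split; [lra|]. split.
  { intros s t Hs Ht. eapply Rle_trans; [apply HL; apply Hg; auto| apply Hlip]. }
  split; [rewrite Hg0; exact Ha|]. split; [rewrite HgT; exact Hb|]. split; [exact Hnd|].
  intros z. rewrite <- Him. split.
  - intros [t [Ht ->]]. exists (g t). split; [apply Hg; auto| reflexivity].
  - intros [s [Hs ->]]. destruct (Hsurj s Hs) as [t [Ht Hgt]]. exists t.
    split; [auto| rewrite Hgt; reflexivity].
Qed.

Lemma traj_nonneg L a b m v r : trajectory 0 L a b m v r -> 0 <= L.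
Proof. intros [H _]; exact H. Qed.
Lemma traj_start L a b m v r : trajectory 0 L a b m v r -> m 0 = a.
Proof. intros [_ [_ [H _]]]; exact H. Qed.
Lemma traj_end L a b m v r : trajectory 0 L a b m v r -> m L = b.
Proof. intros [_ [_ [_ [H _]]]]; exact H. Qed.
Lemma traj_img L a b m v r t : trajectory 0 L a b m v r -> 0 <= t <= L -> chain_img v r (m t).
Proof. intros [_ [_ [_ [_ [_ H]]]]] Ht. apply H. exists t; auto. Qed.

Lemma seq_sched a1 b1 a2 b2 L1 m1 v1 r1 L2 m2 v2 r2 :
  trajectory 0 L1 a1 b1 m1 v1 r1 -> trajectory 0 L2 a2 b2 m2 v2 r2 ->
  trajectory 0 (L1+L2) a1 b1 (fun t => m1 (Rmin t L1)) v1 r1 /\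
  trajectory 0 (L1+L2) a2 b2 (fun t => m2 (Rmax (t - L1) 0)) v2 r2.
Proof.
  intros T1 T2. pose proof (traj_nonneg _ _ _ _ _ _ T1). pose proof (traj_nonneg _ _ _ _ _ _ T2).
  split.
  - apply (reparam _ L1 _ _ _ _ _ _ T1); [lra| | | | |].
    + intros t Ht; unfold Rmin; destruct Rle_dec; lra.
    + intros s t; unfold Rmin; repeat destruct Rle_dec; unfold Rabs; repeat destruct Rcase_abs; lra.
    + unfold Rmin; destruct Rle_dec; lra.
    + unfold Rmin; destruct Rle_dec; lra.
    + intros s Hs; exists s; split; [lra|]; unfold Rmin; destruct Rle_dec; lra.
  - apply (reparam _ L2 _ _ _ _ _ _ T2); [lra| | | | |].
    + intros t Ht; unfold Rmax; destruct Rle_dec; lra.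
    + intros s t; unfold Rmax; repeat destruct Rle_dec; unfold Rabs; repeat destruct Rcase_abs; lra.
    + unfold Rmax; destruct Rle_dec; lra.
    + unfold Rmax; destruct Rle_dec; lra.
    + intros s Hs; exists (s + L1); split; [lra|]; unfold Rmax; destruct Rle_dec; lra.
Qed.

Definition GOAL (a1 a2 b1 b2 : pt) : Prop :=
  exists (t0 t1 : R) (m1 m2 : R -> pt) (v1 : pt) (r1 : list pt)
         (v2 : pt) (r2 : list pt),
    trajectory t0 t1 a1 b1 m1 v1 r1 /\
    trajectory t0 t1 a2 b2 m2 v2 r2 /\
    feasible t0 t1 m1 m2 /\
    chain_len v1 r1 + chain_len v2 r2 = norm1 (psub a1 b1) + norm1 (psub a2 b2) /\
    (chain_turns v1 r1 <= 1)%nat /\ (chain_turns v2 r2 <= 1)%nat.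

Lemma core (f : pt -> R) a1 a2 b1 b2 :
  (forall p q, f p - f q >= 1 -> in_F2 p q) ->
  (forall a b z, inbox a b z -> between (f a) (f b) (f z)) ->
  f a1 >= f a2 + 1 -> f b1 >= f b2 + 1 -> GOAL a1 a2 b1 b2.
Proof.
  intros Hf Hbox H1 H2. unfold GOAL.
  destruct (path a1 b1) as [L1 [m1 [v1 [r1 [T1 [C1 [U1 B1]]]]]]].
  destruct (path a2 b2) as [L2 [m2 [v2 [r2 [T2 [C2 [U2 B2]]]]]]].
  assert (Hbx1: forall t, 0<=t<=L1 -> between (f a1) (f b1) (f (m1 t))).
  { intros t Ht. apply Hbox, B1. eapply traj_img; eauto. }
  assert (Hbx2: forall t, 0<=t<=L2 -> between (f a2) (f b2) (f (m2 t))).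
  { intros t Ht. apply Hbox, B2. eapply traj_img; eauto. }
  pose proof (traj_nonneg _ _ _ _ _ _ T1). pose proof (traj_nonneg _ _ _ _ _ _ T2).
  pose proof (traj_start _ _ _ _ _ _ T1) as S1a. pose proof (traj_start _ _ _ _ _ _ T2) as S2a.
  pose proof (traj_end _ _ _ _ _ _ T1) as E1b. pose proof (traj_end _ _ _ _ _ _ T2) as E2b.
  destruct (Rle_dec (f a2 + 1) (f b1)).
  - destruct (seq_sched _ _ _ _ _ _ _ _ _ _ _ _ T1 T2) as [S1 S2].
    exists 0, (L1+L2), (fun t => m1 (Rmin t L1)), (fun t => m2 (Rmax (t - L1) 0)), v1, r1, v2, r2. split; [exact S1|]. split; [exact S2|].
    split; [|split; [rewrite C1, C2; reflexivity| split; assumption]].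
    intros t Ht. cbv beta. destruct (Rle_dec t L1).
    + rewrite Rmin_left by lra. rewrite Rmax_right by lra.
      rewrite S2a. apply Hf. pose proof (Hbx1 t ltac:(lra)) as Hb. unfold between in Hb; lra.
    + rewrite Rmin_right by lra. rewrite Rmax_left by lra.
      rewrite E1b. apply Hf. pose proof (Hbx2 (t - L1) ltac:(lra)) as Hb. unfold between in Hb; lra.
  - destruct (seq_sched _ _ _ _ _ _ _ _ _ _ _ _ T2 T1) as [S2 S1].
    exists 0, (L2+L1), (fun t => m1 (Rmax (t - L2) 0)), (fun t => m2 (Rmin t L2)), v1, r1, v2, r2. split; [exact S1|]. split; [exact S2|].
    split; [|split; [rewrite C1, C2; reflexivity| split; assumption]].
    intros t Ht. cbv beta. destruct (Rle_dec t L2).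
    + rewrite Rmin_left by lra. rewrite Rmax_right by lra.
      rewrite S1a. apply Hf. pose proof (Hbx2 t ltac:(lra)) as Hb. unfold between in Hb; lra.
    + rewrite Rmin_right by lra. rewrite Rmax_left by lra.
      rewrite E2b. apply Hf. pose proof (Hbx1 (t - L2) ltac:(lra)) as Hb. unfold between in Hb; lra.
Qed.

Theorem corollary3p4 (a1 a2 b1 b2 : pt) :
  in_F2 a1 a2 -> in_F2 b1 b2 -> commonly_ordered a1 a2 b1 b2 ->
  exists (t0 t1 : R) (m1 m2 : R -> pt) (v1 : pt) (r1 : list pt)
         (v2 : pt) (r2 : list pt),
    trajectory t0 t1 a1 b1 m1 v1 r1 /\
    trajectory t0 t1 a2 b2 m2 v2 r2 /\
    feasible t0 t1 m1 m2 /\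
    chain_len v1 r1 + chain_len v2 r2 = norm1 (psub a1 b1) + norm1 (psub a2 b2) /\
    (chain_turns v1 r1 <= 1)%nat /\ (chain_turns v2 r2 <= 1)%nat.
Proof.
  intros _ _ Hco. fold (GOAL a1 a2 b1 b2).
  destruct Hco as [[[_ H1] [_ H2]] | [[[_ H1] [_ H2]] | [[[_ H1] [_ H2]] | [[_ H1] [_ H2]]]]].
  - apply (core px); [| |lra|lra].
    + intros p q H; apply inF2_x; lra.
    + intros a b z [Hx _]; exact Hx.
  - apply (core (fun p => - px p)); [| |lra|lra].
    + intros p q H; apply inF2_x; lra.
    + intros a b z [Hx _]; unfold between in *; lra.
  - apply (core py); [| |lra|lra].
    + intros p q H; apply inF2_y; lra.
    + intros a b z [_ Hy]; exact Hy.
  - apply (core (fun p => - py p)); [| |lra|lra].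
    + intros p q H; apply inF2_y; lra.
    + intros a b z [_ Hy]; unfold between in *; lra.
Qed.
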